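(* For $k\ge1$, let $\alpha(k)$ be the smallest integer $n$ such that there is a string of length $n$ whose Manacher array (of length $2n-1$) is not the Manacher array of any string with fewer than $k$ distinct symbols. Then $\alpha(1)=1$ and $\alpha(k)=2^{k-2}+1$ for all $k\ge2$. Equivalently, for $n\ge2$, every Manacher array of a string of length $n$ is realized by a string with at most $\lfloor\log_2(n-1)\rfloor+2$ distinct symbols, and this bound is attained for every such $n$.
   Context: The Manacher array of a string $S$ of length $n$ is the array $\mathsf A[1..2n-1]$: $\mathsf A[2k-1]$ is the largest $r\ge0$ with $1\le k-r$, $k+r\le n$ and $S[k-r..k+r]$ a palindrome; $\mathsf A[2k]$ is the largest $r\ge0$ with $1\le k-r+1$, $k+r\le n$ and $S[k-r+1..k+r]$ a palindrome. *)

(* Defs.v *)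
From mathcomp Require Import all_boot.
Set Implicit Arguments. Unset Strict Implicit. Unset Printing Implicit Defensive.

(* Strings are sequences over an eqType alphabet; positions are 1-based as in the paper. *)
Section Manacher.
Variable T : eqType.

(* S[a..b] (1-based, inclusive); empty when b < a. *)
Definition substr (s : seq T) (a b : nat) : seq T := take (b.+1 - a) (drop a.-1 s).

Definition palindrome (w : seq T) : bool := rev w == w.

Definition manacher_entry (s : seq T) (i : nat) : nat :=
  let n := size s in
  if odd i then
    let k := i.+1 %/ 2 in
    \max_(0 <= r < n | [&& 1 <= k - r, r <= k, k + r <= n & palindrome (substr s (k - r) (k + r))]) r
  else
    let k := i %/ 2 in
    \max_(0 <= r < n | [&& r <= k, k + r <= n & palindrome (substr s (k - r).+1 (k + r))]) r.

(* The Manacher array A[1..2n-1], as a list of length 2n-1 (empty if n = 0). *)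
Definition manacher (s : seq T) : seq nat :=
  [seq manacher_entry s i | i <- iota 1 (2 * size s - 1)].

End Manacher.

Definition nsymbols (T : eqType) (s : seq T) : nat := size (undup s).

Definition witness_len (k n : nat) : Prop :=
  exists s : seq nat, size s = n /\
    forall t : seq nat, nsymbols t < k -> manacher t <> manacher s.

Definition is_alpha (k a : nat) : Prop :=
  witness_len k a /\ forall n, n < a -> ~ witness_len k n.

(* Main.v *)
Require Import Defs.
From mathcomp Require Import all_boot zify.
Set Implicit Arguments. Unset Strict Implicit. Unset Printing Implicit Defensive.

Definition seg (u : seq nat) a l := take l (drop a u).
Definition pal (u : seq nat) a l := palindrome (seg u a l).

Lemma size_seg u a l : a + l <= size u -> size (seg u a l) = l.
Proof. move=> h; rewrite /seg size_take size_drop; case: ltnP; lia. Qed.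

Lemma nth_seg u a l i : i < l -> nth 0 (seg u a l) i = nth 0 u (a + i).
Proof. by move=> h; rewrite /seg nth_take // nth_drop. Qed.

Lemma palP u a l : a + l <= size u ->
  reflect (forall i, i < l -> nth 0 u (a+i) = nth 0 u (a + (l-1-i))) (pal u a l).
Proof.
move=> h; rewrite /pal /palindrome; apply: (iffP eqP) => [E i il | H].
  rewrite -(nth_seg u a il) -(@nth_seg u a l (l-1-i)); last lia.
  rewrite -{1}E nth_rev size_seg //; congr nth; lia.
apply: (@eq_from_nth _ 0); first by rewrite size_rev.
move=> i; rewrite size_rev size_seg // => il.
rewrite nth_rev size_seg // !nth_seg; try lia.
rewrite H; last lia. congr nth; lia.
Qed.

Lemma pal_rec u a l : a + l + 2 <= size u ->
  pal u a l.+2 = (nth 0 u a == nth 0 u (a + l.+1)) && pal u a.+1 l.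
Proof.
move=> h; have h2 : a + l.+2 <= size u by lia.
have h3 : a.+1 + l <= size u by lia.
apply/idP/andP.
  move/(palP h2) => H; split.
    by apply/eqP; rewrite -[a in nth 0 u a]addn0 H //; congr nth; lia.
  apply/(palP h3) => i il.
  transitivity (nth 0 u (a + i.+1)); first (congr nth; lia).
  rewrite H; last lia. congr nth; lia.
case=> /eqP E /(palP h3) H'; apply/(palP h2) => i il.
case: i il => [|i] il; first by rewrite addn0 E; congr nth; lia.
case: (ltnP i l) => il2.
  rewrite addnS -addSn H' //; congr nth; lia.
have -> : i = l by lia.
rewrite -E; congr nth; lia.
Qed.

Lemma pal_shrink u a l d : a + l <= size u -> 2 * d <= l -> pal u a l ->
  pal u (a + d) (l - 2 * d).
Proof.
move=> h hd /(palP h) H; have h' : a + d + (l - 2 * d) <= size u by lia.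
apply/(palP h') => i il.
rewrite -addnA H; last lia. congr nth; lia.
Qed.

Lemma pal_mirror u a l x : a + l <= size u -> pal u a l -> a <= x < a + l ->
  nth 0 u x = nth 0 u (a + (a + l - 1 - x)).
Proof.
move=> h /(palP h) H hx; have -> : x = a + (x - a) by lia.
rewrite H; last lia. congr nth; lia.
Qed.

Definition PS (u v : seq nat) :=
  size v = size u /\ forall a l, a + l <= size u -> pal v a l = pal u a l.

Lemma substr_seg (u : seq nat) a b : palindrome (substr u a b) = pal u a.-1 (b.+1 - a).
Proof. by []. Qed.

Lemma manacher_PS u v : PS u v -> manacher v = manacher u.
Proof.
case=> hs H; rewrite /manacher hs; apply: eq_map => i.
rewrite /manacher_entry hs; case: ifP => _; apply: eq_bigl => r.
  apply/andb_id2l => h1; apply/andb_id2l => h2; apply/andb_id2l => h3.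
  rewrite !substr_seg H //; lia.
apply/andb_id2l => h2; apply/andb_id2l => h3.
rewrite !substr_seg H //; lia.
Qed.

Lemma pal1 u a : a < size u -> pal u a 1.
Proof. move=> h; have h1 : a + 1 <= size u by lia.
apply/(palP h1) => i; by case: i. Qed.

Lemma pal0 u a : pal u a 0.
Proof. by rewrite /pal /seg take0. Qed.

Lemma entry_odd u k : 0 < k -> manacher_entry u (2*k-1) =
  \max_(r < size u | [&& 1 <= k - r, r <= k, k + r <= size u &
      pal u (k-r).-1 ((k+r).+1 - (k-r))]) r.
Proof.
move=> k0; rewrite /manacher_entry.
have -> : 2 * k - 1 = (k.-1).*2.+1 by lia.
rewrite /= odd_double /=.
have -> : (k.-1.*2.+2) %/ 2 = k.
  by rewrite -doubleS -muln2 mulnK //; lia.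
by rewrite big_mkord.
Qed.

Lemma entry_even u k : manacher_entry u (2*k) =
  \max_(r < size u | [&& r <= k, k + r <= size u &
      pal u (k-r) ((k+r).+1 - (k-r).+1)]) r.
Proof.
rewrite /manacher_entry.
have -> : 2 * k = k.*2 by lia.
rewrite odd_double -muln2 mulnK //.
by rewrite big_mkord.
Qed.

Lemma center_odd u k r : 0 < k -> r < k -> k + r <= size u ->
  pal u (k-1-r) (2*r+1) = (r <= manacher_entry u (2*k-1)).
Proof.
move=> k0 rk hn; rewrite entry_odd //.
have rn : r < size u by lia.
apply/idP/idP => [hp|].
  apply: (leq_bigmax_cond (Ordinal rn)) => /=.
  have -> : (k-r).-1 = k-1-r by lia.
  have -> : (k+r).+1 - (k-r) = 2*r+1 by lia.
  rewrite hp; apply/and4P; split => //; lia.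
apply: contraTT => hp.
case: r rk hn rn hp => [|r] rk hn rn hp.
  by move: hp; rewrite pal1 //; lia.
rewrite -ltnNge ltnS; apply/bigmax_leqP => -[r' r'lt] /= /and4P [h1 h2 h3 h4].
rewrite leqNgt; apply/negP => lt.
move: hp; rewrite (_ : pal _ _ _ = true) //.
have -> : k - 1 - r.+1 = (k-r').-1 + (r' - r.+1) by lia.
have -> : 2 * r.+1 + 1 = (k+r').+1 - (k-r') - 2 * (r' - r.+1) by lia.
apply: pal_shrink => //; lia.
Qed.

Lemma center_even u k r : 0 < r -> r <= k -> k + r <= size u ->
  pal u (k-r) (2*r) = (r <= manacher_entry u (2*k)).
Proof.
move=> r0 rk hn; rewrite entry_even //.
have rn : r < size u by lia.
apply/idP/idP => [hp|].
  apply: (leq_bigmax_cond (Ordinal rn)) => /=.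
  have -> : (k+r).+1 - (k-r).+1 = 2*r by lia.
  rewrite hp; apply/and3P; split => //; lia.
apply: contraTT => hp.
case: r r0 rk hn rn hp => [|r] // r0 rk hn rn hp.
rewrite -ltnNge ltnS; apply/bigmax_leqP => -[r' r'lt] /= /and3P [h2 h3 h4].
rewrite leqNgt; apply/negP => lt.
move: hp; rewrite (_ : pal _ _ _ = true) //.
have -> : k - r.+1 = (k-r') + (r' - r.+1) by lia.
have -> : 2 * r.+1 = (k+r').+1 - (k-r').+1 - 2 * (r' - r.+1) by lia.
apply: pal_shrink => //; lia.
Qed.

Lemma PS_manacher u v : manacher v = manacher u -> PS u v.
Proof.
move=> E.
have hs : size v = size u.
  by move: (congr1 size E); rewrite !size_map !size_iota; lia.
have Ent : forall i, 0 < i <= 2 * size u - 1 ->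
    manacher_entry v i = manacher_entry u i.
  case=> [|i] // hi; move: (congr1 (fun s => nth 0 s i) E).
  have hi' : i < 2 * size u - 1 by lia.
  by rewrite /manacher hs /= !(nth_map 0) ?size_iota // !nth_iota.
split => // a l hal.
have hl := odd_double_half l.
move: (l./2) hl => r hl.
case/boolP: (odd l) => ho; move: hl; rewrite ?ho ?(negbTE ho) /= -muln2 => hl.
  have ha : a = (a + r + 1) - 1 - r by lia.
  have hl' : l = 2 * r + 1 by lia.
  have h1 : 0 < a + r + 1 by lia.
  have h2 : r < a + r + 1 by lia.
  have h3 : a + r + 1 + r <= size u by apply: leq_trans hal; lia.
  have h3' : a + r + 1 + r <= size v by rewrite hs.
  rewrite hl' ha (center_odd h1 h2 h3) (center_odd h1 h2 h3') Ent //; lia.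
case: (posnP r) => r0.
  have -> : l = 0 by lia.
  by rewrite !pal0.
have ha : a = (a + r) - r by lia.
have hl' : l = 2 * r by lia.
have h2 : r <= a + r by lia.
have h3 : a + r + r <= size u by apply: leq_trans hal; lia.
have h3' : a + r + r <= size v by rewrite hs.
rewrite hl' ha (center_even r0 h2 h3) (center_even r0 h2 h3') Ent //; lia.
Qed.

Definition Hl (u : seq nat) e L :=
  [seq nth 0 u (e - 1 - m) | m <- iota 0 L & pal u (e - m) m].

Lemma mem_Hl u e L x :
  reflect (exists2 m, (m < L) && pal u (e - m) m & x = nth 0 u (e - 1 - m))
          (x \in Hl u e L).
Proof.
apply: (iffP mapP) => -[m].
  rewrite mem_filter mem_iota /= add0n => /andP [hp hm] ->.
  by exists m => //; rewrite hm hp.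
move=> /andP [hm hp] ->; exists m => //.
by rewrite mem_filter mem_iota /= add0n hm hp.
Qed.

Lemma undup_sub1 (A B : seq nat) y : (forall x, x \in A -> x = y \/ x \in B) ->
  size (undup A) <= (size (undup B)).+1.
Proof.
move=> H; have -> : (size (undup B)).+1 = size (y :: undup B) by [].
apply: uniq_leq_size; first exact: undup_uniq.
move=> x; rewrite mem_undup => /H [->|]; first exact: mem_head.
by rewrite inE mem_undup => ->; rewrite orbT.
Qed.

Lemma undup_sub0 (A B : seq nat) : (forall x, x \in A -> x \in B) ->
  size (undup A) <= size (undup B).
Proof.
move=> H; apply: uniq_leq_size; first exact: undup_uniq.
by move=> x; rewrite !mem_undup => /H.
Qed.

Lemma lpps u e L : 0 < L -> L <= e -> e <= size u ->
  exists L', [/\ L' < L, pal u (e - L') L',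
     (forall m, m < L -> pal u (e - m) m -> m <= L') &
     (forall x, x \in Hl u e L -> x = nth 0 u (e - 1 - L') \/ x \in Hl u e L')].
Proof.
move=> L0 Le es.
have exP : exists m, (fun m => (m < L) && pal u (e - m) m) m.
  by exists 0; rewrite L0 pal0.
have ubP : forall m, (fun m => (m < L) && pal u (e - m) m) m -> m <= L.
  by move=> m /andP [/ltnW].
case: (ex_maxnP exP ubP) => L' /andP [h1 h2] hmax.
exists L'; split => // [m hm hp|x /mem_Hl [m /andP [hm hp] ->]].
  by apply: hmax; rewrite hm.
case: (ltngtP m L') => c.
- by right; apply/mem_Hl; exists m => //; rewrite c.
- by have := hmax m; rewrite hm hp => /(_ isT); lia.
- by left; rewrite c.
Qed.

Lemma Hl0 u e : Hl u e 0 = [::].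
Proof. by []. Qed.

Lemma claimA u L : forall e, L <= e -> e <= size u -> pal u (e - L) L ->
  2 ^ size (undup (Hl u e L)) <= L.+1.
Proof.
elim/ltn_ind: L => L IH e Le es hP.
case: (posnP L) => [->|L0]; first by rewrite Hl0.
have [L' [h1 h2 hmax hmem]] := lpps L0 Le es.
have hQ := IH L' h1 e ltac:(lia) es h2.
case: (ltnP (2 * L') L) => c.
  apply: leq_trans (_ : 2 ^ (size (undup (Hl u e L'))).+1 <= _).
    by rewrite leq_exp2l // (undup_sub1 hmem).
  rewrite expnS; move: hQ; move: (2 ^ size (undup (Hl u e L'))) => z; lia.
suff : size (undup (Hl u e L)) <= size (undup (Hl u e L')).
  move=> hD; apply: leq_trans (_ : 2 ^ size (undup (Hl u e L')) <= _).
    by rewrite leq_exp2l.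
  move: hQ; move: (2 ^ size (undup (Hl u e L'))) => z; lia.
apply: undup_sub0 => x /hmem [->|] //.
have sP : e - L + L <= size u by lia.
have sQ : e - L' + L' <= size u by lia.
set m2 := 2 * L' - L.
apply/mem_Hl; exists m2.
  rewrite (_ : m2 < L' = true); last by rewrite /m2; lia.
  have sR : e - m2 + m2 <= size u by lia.
  apply/(palP sR) => i il.
  rewrite (pal_mirror sQ h2); last by rewrite /m2 in il *; lia.
  rewrite (pal_mirror sP hP); last by rewrite /m2 in il *; lia.
  rewrite (pal_mirror sQ h2); last by rewrite /m2 in il *; lia.
  congr nth; rewrite /m2 in il *; lia.
rewrite (pal_mirror sQ h2 (x := e - 1 - m2)); last by rewrite /m2; lia.
rewrite (pal_mirror sP hP); last by rewrite /m2; lia.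
congr nth; rewrite /m2; lia.
Qed.

Lemma claimB u L e : 0 < L -> L <= e -> e <= size u ->
  2 ^ size (undup (Hl u e L)) <= 2 * L.
Proof.
move=> L0 Le es.
have [L' [h1 h2 hmax hmem]] := lpps L0 Le es.
have hQ := claimA (L := L') (e := e) ltac:(lia) es h2.
apply: leq_trans (_ : 2 ^ (size (undup (Hl u e L'))).+1 <= _).
  by rewrite leq_exp2l // (undup_sub1 hmem).
rewrite expnS; move: hQ; move: (2 ^ size (undup (Hl u e L'))) => z; lia.
Qed.

Lemma pal_prefix u v n a l : n <= size u -> n <= size v ->
  (forall x, x < n -> nth 0 u x = nth 0 v x) -> a + l <= n -> pal u a l = pal v a l.
Proof.
move=> hu hv H hal.
have su : a + l <= size u by lia.
have sv : a + l <= size v by lia.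
apply/(palP su)/(palP sv) => P i il.
  by rewrite -!H; try lia; apply: P.
by rewrite !H; try lia; apply: P.
Qed.

Lemma cons_key u j i i0 : j <= size u -> i < i0 -> i0 < j ->
  pal u i.+1 (j - 1 - i) -> pal u i0.+1 (j - 1 - i0) ->
  (nth 0 u i == nth 0 u i0) = pal u i (i + j - i0 - i).+1.
Proof.
move=> ju h1 h2 hB hS.
have sB : i.+1 + (j - 1 - i) <= size u by lia.
have sS : i0.+1 + (j - 1 - i0) <= size u by lia.
have -> : (i + j - i0 - i).+1 = (i + j - i0 - i - 1).+2 by lia.
rewrite pal_rec; last lia.
have -> : nth 0 u i0 = nth 0 u (i + (i + j - i0 - i - 1).+1).
  rewrite (pal_mirror sB hB); last lia. congr nth; lia.
suff -> : pal u i.+1 (i + j - i0 - i - 1) by rewrite andbT.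
have sR : i.+1 + (i + j - i0 - i - 1) <= size u by lia.
apply/(palP sR) => w wl.
rewrite (pal_mirror sB hB); last lia.
rewrite (pal_mirror sS hS); last lia.
rewrite (pal_mirror sB hB); last lia.
congr nth; lia.
Qed.

Lemma undup_size_eq (f g : nat -> nat) (I : seq nat) :
  {in I &, forall i i', (f i == f i') = (g i == g i')} ->
  size (undup (map f I)) = size (undup (map g I)).
Proof.
elim: I => [|x I IH] // H /=.
have H' : {in I &, forall i i', (f i == f i') = (g i == g i')}.
  by move=> i i' hi hi'; apply: H; rewrite inE ?hi ?hi' orbT.
have -> : (f x \in map f I) = (g x \in map g I).
  apply/mapP/mapP => -[i hi /eqP e]; exists i => //; apply/eqP.
    by rewrite -H ?inE ?eqxx ?hi ?orbT.
  by rewrite H ?inE ?eqxx ?hi ?orbT.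
by case: ifP => _ /=; rewrite IH.
Qed.

Lemma greedy_step s t j K : j < size s -> size t = j -> all (fun x => x < K) t ->
  (forall a l, a + l <= j -> pal t a l = pal s a l) ->
  size (undup (Hl s j j)) < K ->
  exists c, c < K /\ forall i, i < j -> pal s i.+1 (j - 1 - i) ->
      (nth 0 t i == c) = (nth 0 s i == nth 0 s j).
Proof.
move=> js tj tK PS hK.
set C := [seq i <- iota 0 j | pal s i.+1 (j - 1 - i)].
have memC : forall i, (i \in C) = (i < j) && pal s i.+1 (j - 1 - i).
  by move=> i; rewrite mem_filter mem_iota /= add0n andbC.
have key : forall i i', i \in C -> i' \in C -> i < i' ->
    (nth 0 t i == nth 0 t i') = (nth 0 s i == nth 0 s i').
  move=> i i'; rewrite !memC => /andP [h1 h2] /andP [h3 h4] lt.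
  rewrite (cons_key (u := s) (j := j)) //; try lia.
  rewrite (cons_key (u := t) (j := j)) ?PS //; lia.
have cons : {in C &, forall i i', (nth 0 t i == nth 0 t i') = (nth 0 s i == nth 0 s i')}.
  move=> i i' hi hi'; case: (ltngtP i i') => c; first exact: key.
    by rewrite eq_sym [RHS]eq_sym; apply: key.
  by rewrite c !eqxx.
case: (boolP (has (fun i => nth 0 s i == nth 0 s j) C)).
  case/hasP => i0 hi0 /eqP e0; exists (nth 0 t i0); split.
    move/all_nthP: tK; apply; move: hi0; rewrite memC tj; by case/andP.
  move=> i ij hp; rewrite -e0; apply: cons => //; by rewrite memC ij hp.
move/hasPn => hn.
set M := map (nth 0 t) C.
have hM : size (undup M) < K.
  rewrite /M (undup_size_eq (g := nth 0 s)) //.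
  apply: leq_ltn_trans hK; apply: undup_sub0 => x /mapP [i].
  rewrite memC => /andP [ij hp] ->; apply/mem_Hl; exists (j - 1 - i).
    by rewrite (_ : j - (j - 1 - i) = i.+1) ?hp; [rewrite andbT|]; lia.
  congr nth; lia.
case: (boolP (all (fun c => c \in M) (iota 0 K))) => hall.
  have : K <= size (undup M).
    rewrite -[K in K <= _](size_iota 0 K); apply: uniq_leq_size; first exact: iota_uniq.
    by move=> c /(allP hall); rewrite mem_undup.
  lia.
case/allPn: hall => c; rewrite mem_iota add0n /= => hc hcn.
exists c; split => // i ij hp.
have hiC : i \in C by rewrite memC ij hp.
rewrite (negbTE (hn i hiC)).
apply/negbTE; apply: contra hcn => /eqP <-.
by apply/mapP; exists i.
Qed.

Lemma greedy s K : (forall j, j < size s -> size (undup (Hl s j j)) < K) ->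
  forall n, n <= size s -> exists t, [/\ size t = n, all (fun x => x < K) t &
     forall a l, a + l <= n -> pal t a l = pal s a l].
Proof.
move=> HK; elim=> [|j IH] hn.
  exists [::]; split => // a l hal; have -> : l = 0 by lia.
  by rewrite !pal0.
have [t [tj tK PS]] := IH (ltnW hn).
have [c [cK hc]] := greedy_step hn tj tK PS (HK j hn).
exists (rcons t c); split.
- by rewrite size_rcons tj.
- by rewrite all_rcons cK.
have nt : forall x, x < j -> nth 0 (rcons t c) x = nth 0 t x.
  by move=> x xj; rewrite nth_rcons tj xj.
move=> a l hal.
case: (leqP (a + l) j) => hal2.
  rewrite (pal_prefix (n := j) (v := t)); [exact: PS|rewrite size_rcons; lia|lia|exact: nt|lia].
have e : a + l = j.+1 by lia.
case: l e hal hal2 => [|[|l]] e hal hal2.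
- by rewrite !pal0.
- by rewrite !pal1 // ?size_rcons; lia.
rewrite !pal_rec ?size_rcons ?tj; try lia.
have -> : a + l.+1 = j by lia.
rewrite [nth 0 (rcons t c) j]nth_rcons tj ltnn eqxx nt; last lia.
rewrite (pal_prefix (n := j) (v := t)); [|rewrite size_rcons; lia|lia|exact: nt|lia].
rewrite PS; last lia.
case hp : (pal s a.+1 l); rewrite ?andbF ?andbT //.

apply: hc; first lia.
by rewrite (_ : j - 1 - a = l) //; lia.
Qed.

Lemma upper k n : 2 <= k -> n <= 2 ^ (k - 2) -> ~ witness_len k n.
Proof.
move=> k2 hn [s [sn H]].
have HK : forall j, j < size s -> size (undup (Hl s j j)) < k - 1.
  move=> j js; case: (posnP j) => [->|j0]; first by rewrite Hl0 /=; lia.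
  have := claimB (u := s) j0 (leqnn j) (ltnW js).
  rewrite -(ltn_exp2l _ _ (ltnSn 1)) => h.
  apply: leq_ltn_trans h _.
  have -> : k - 1 = (k - 2).+1 by lia.
  rewrite expnS; move: hn; move: (2 ^ (k - 2)) => z; lia.
have [t [ts tK PS]] := greedy HK (leqnn (size s)).
apply: (H t); last by apply: manacher_PS; split => //; rewrite ts.
rewrite /nsymbols.
have : size (undup t) <= size (iota 0 (k - 1)).
  apply: uniq_leq_size; first exact: undup_uniq.
  move=> x; rewrite mem_undup mem_iota add0n /= => xt.
  exact: (allP tK).
rewrite size_iota; lia.
Qed.

Lemma v2_eq a b : 0 < a -> 0 < b -> (forall e, (2 ^ e %| a) = (2 ^ e %| b)) ->
  logn 2 a = logn 2 b.
Proof.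
move=> a0 b0 H; apply/eqP; rewrite eqn_leq.
have := H (logn 2 a); have := H (logn 2 b).
rewrite !pfactor_dvdn // !leqnn => h1 h2; by rewrite h1 -h2.
Qed.

Lemma v2_add c y m : 2 ^ m %| c -> 0 < y < 2 ^ m -> logn 2 (c + y) = logn 2 y.
Proof.
move=> hc /andP [y0 ym]; apply: v2_eq => //; first lia.
move=> e; case: (leqP e m) => em.
  by rewrite dvdn_addr // (dvdn_trans (dvdn_exp2l 2 em)).
have hy : (2 ^ m %| y) = false.
  by apply/negbTE/negP => /dvdn_leq => /(_ y0); lia.
have mle : 2 ^ m %| 2 ^ e by apply: dvdn_exp2l; lia.
by apply/idP/idP => /(dvdn_trans mle); rewrite ?(dvdn_addr _ hc) hy.
Qed.

Lemma v2_sub c y m : 2 ^ m %| c -> 0 < y < 2 ^ m -> y < c -> logn 2 (c - y) = logn 2 y.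
Proof.
move=> hc /andP [y0 ym] yc; apply: v2_eq => //; first lia.
move=> e; case: (leqP e m) => em.
  by rewrite dvdn_subr ?(ltnW yc) // (dvdn_trans (dvdn_exp2l 2 em)).
have hy : (2 ^ m %| y) = false.
  by apply/negbTE/negP => /dvdn_leq => /(_ y0); lia.
have mle : 2 ^ m %| 2 ^ e by apply: dvdn_exp2l; lia.
by apply/idP/idP => /(dvdn_trans mle); rewrite ?(dvdn_subr (ltnW yc) hc) hy.
Qed.

Definition sw k := rcons [seq logn 2 (2 ^ (k - 2) - q) | q <- iota 0 (2 ^ (k - 2))] (k - 1).

Lemma size_sw k : size (sw k) = 2 ^ (k - 2) + 1.
Proof. by rewrite /sw size_rcons size_map size_iota addn1. Qed.

Lemma nth_sw k q : q < 2 ^ (k - 2) -> nth 0 (sw k) q = logn 2 (2 ^ (k - 2) - q).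
Proof.
move=> hq; rewrite /sw nth_rcons size_map size_iota hq (nth_map 0) ?size_iota //.
by rewrite nth_iota.
Qed.

Lemma nth_swJ k : nth 0 (sw k) (2 ^ (k - 2)) = k - 1.
Proof. by rewrite /sw nth_rcons size_map size_iota ltnn eqxx. Qed.

Lemma odiff u v a l : PS u v -> a + l.+2 <= size u -> pal u a.+1 l ->
  nth 0 u a != nth 0 u (a + l.+1) -> nth 0 v a != nth 0 v (a + l.+1).
Proof.
move=> [hs H] hal hp hne.
have := H a l.+2 hal; rewrite !pal_rec ?hs; try lia.
rewrite H ?hp ?andbT; last lia.
by rewrite (negbTE hne) => /negbT.
Qed.

Lemma sw_pal_a k m : m <= k - 2 -> pal (sw k) (2 ^ (k - 2) - 2 ^ m).+1 (2 ^ m - 1).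
Proof.
move=> mk; have p1 : 0 < 2 ^ m by rewrite expn_gt0.
have pJ : 2 ^ m <= 2 ^ (k - 2) by rewrite leq_exp2l.
have ss : (2 ^ (k - 2) - 2 ^ m).+1 + (2 ^ m - 1) <= size (sw k) by rewrite size_sw; lia.
apply/(palP ss) => i il.
rewrite !nth_sw; try lia.
rewrite (_ : 2 ^ (k - 2) - ((2 ^ (k - 2) - 2 ^ m).+1 + i) = 2 ^ m - i.+1); last lia.
rewrite (_ : 2 ^ (k - 2) - ((2 ^ (k - 2) - 2 ^ m).+1 + (2 ^ m - 1 - 1 - i)) = i.+1); last lia.
rewrite (v2_sub (m := m)) //; lia.
Qed.

Lemma sw_pal_c k m m' : m < m' -> m' <= k - 2 ->
  pal (sw k) (2 ^ (k - 2) - 2 ^ m').+1 (2 ^ m - 1).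
Proof.
move=> mm mk; have p1 : 0 < 2 ^ m by rewrite expn_gt0.
have pJ : 2 ^ m' <= 2 ^ (k - 2) by rewrite leq_exp2l.
have p2 : 2 ^ m.+1 <= 2 ^ m' by rewrite leq_exp2l.
rewrite expnS in p2.
have ss : (2 ^ (k - 2) - 2 ^ m').+1 + (2 ^ m - 1) <= size (sw k) by rewrite size_sw; lia.
apply/(palP ss) => i il.
rewrite !nth_sw; try lia.
rewrite (_ : 2 ^ (k - 2) - ((2 ^ (k - 2) - 2 ^ m').+1 + i) = 2 ^ m' - i.+1); last lia.
rewrite (_ : 2 ^ (k - 2) - ((2 ^ (k - 2) - 2 ^ m').+1 + (2 ^ m - 1 - 1 - i))
   = (2 ^ m' - 2 ^ m) + i.+1); last lia.
rewrite (v2_sub (m := m)) ?dvdn_exp2l; try lia.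
rewrite (v2_add (m := m)) // ?dvdn_sub ?dvdn_exp2l //; try lia.
Qed.

Lemma sw_val k m : m <= k - 2 -> nth 0 (sw k) (2 ^ (k - 2) - 2 ^ m) = m.
Proof.
move=> mk; have p1 : 0 < 2 ^ m by rewrite expn_gt0.
have pJ : 2 ^ m <= 2 ^ (k - 2) by rewrite leq_exp2l.
rewrite nth_sw; last lia.
by rewrite (_ : 2 ^ (k - 2) - (2 ^ (k - 2) - 2 ^ m) = 2 ^ m) ?pfactorK //; lia.
Qed.

Lemma sw_val2 k m m' : m < m' -> m' <= k - 2 ->
  nth 0 (sw k) (2 ^ (k - 2) - 2 ^ m' + 2 ^ m) = m.
Proof.
move=> mm mk; have p1 : 0 < 2 ^ m by rewrite expn_gt0.
have pJ : 2 ^ m' <= 2 ^ (k - 2) by rewrite leq_exp2l.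
have p2 : 2 ^ m.+1 <= 2 ^ m' by rewrite leq_exp2l.
rewrite expnS in p2.
rewrite nth_sw; last lia.
rewrite (_ : 2 ^ (k - 2) - (2 ^ (k - 2) - 2 ^ m' + 2 ^ m) = 2 ^ m' - 2 ^ m); last lia.
rewrite (v2_sub (m := m')) ?pfactorK //; try lia.

Qed.

Lemma lower k : 2 <= k -> witness_len k (2 ^ (k - 2) + 1).
Proof.
move=> k2; exists (sw k); split; first exact: size_sw.
move=> t nt E.
have hP := PS_manacher E.
have [ts _] := hP.
set J := 2 ^ (k - 2) in ts.
have T1 : forall m, m <= k - 2 -> nth 0 t (J - 2 ^ m) != nth 0 t J.
  move=> m mk; have p1 : 0 < 2 ^ m by rewrite expn_gt0.
  have pJ : 2 ^ m <= J by rewrite leq_exp2l.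
  have := odiff (a := J - 2 ^ m) (l := 2 ^ m - 1) hP.
  rewrite (_ : J - 2 ^ m + (2 ^ m - 1).+1 = J); last lia.
  apply; first by rewrite size_sw -/J; lia.
    exact: sw_pal_a.
  by rewrite sw_val // nth_swJ; apply/eqP; lia.
have T2 : forall m m', m < m' -> m' <= k - 2 ->
    nth 0 t (J - 2 ^ m') != nth 0 t (J - 2 ^ m).
  move=> m m' mm mk; have p1 : 0 < 2 ^ m by rewrite expn_gt0.
  have pJ : 2 ^ m' <= J by rewrite leq_exp2l.
  have p2 : 2 ^ m.+1 <= 2 ^ m' by rewrite leq_exp2l.
  rewrite expnS in p2.
  have := odiff (a := J - 2 ^ m') (l := 2 ^ m - 1) hP.
  rewrite (_ : J - 2 ^ m' + (2 ^ m - 1).+1 = J - 2 ^ m' + 2 ^ m); last lia.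
  move=> h.
  have -> : nth 0 t (J - 2 ^ m) = nth 0 t (J - 2 ^ m' + 2 ^ m).
    have hp : pal t (J - 2 ^ m').+1 (2 ^ m' - 1).
      case: hP => _ ->; first exact: sw_pal_a.
      by rewrite size_sw -/J; lia.
    have p1' : 0 < 2 ^ m' by rewrite expn_gt0.
    have st : (J - 2 ^ m').+1 + (2 ^ m' - 1) <= size t by rewrite ts size_sw -/J; lia.
    rewrite (pal_mirror st hp (x := J - 2 ^ m' + 2 ^ m)); last lia.
    congr nth; lia.
  apply: h; first by rewrite size_sw -/J; lia.
    exact: sw_pal_c.
  by rewrite sw_val ?sw_val2 // neq_ltn mm orbT.
pose f m := nth 0 t (J - 2 ^ m).
pose V := nth 0 t J :: map f (iota 0 (k - 1)).
have uV : uniq V.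
  rewrite /V /= map_inj_in_uniq ?iota_uniq ?andbT.
    apply/mapP => -[m]; rewrite mem_iota add0n /= => hm.
    by apply/eqP; rewrite eq_sym; apply: T1; lia.
  move=> m m'; rewrite !mem_iota !add0n /= => hm hm' e.
  case: (ltngtP m m') => // c.
    by move: (T2 m m' c ltac:(lia)); rewrite /f in e; rewrite e eqxx.
  by move: (T2 m' m c ltac:(lia)); rewrite /f in e; rewrite e eqxx.
have : size V <= size (undup t).
  apply: uniq_leq_size => // x; rewrite mem_undup inE => /orP [/eqP ->|/mapP [m]].
    by apply: mem_nth; rewrite ts size_sw -/J; lia.
  rewrite mem_iota add0n /= => hm ->; apply: mem_nth; rewrite ts size_sw -/J.
  have : 0 < 2 ^ m by rewrite expn_gt0.
  lia.
move=> h; have := leq_ltn_trans h nt; rewrite /= size_map size_iota; lia.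
Qed.

Theorem corollary5p2 :
  is_alpha 1 1 /\ (forall k, 2 <= k -> is_alpha k (2 ^ (k - 2) + 1)).
Proof.
split.
  split.
    exists [:: 0]; split => // t nt E.
    case: t nt E => [|x t'] nt E.
      by have := congr1 size E; rewrite /manacher !size_map !size_iota.
    have : x \in undup (x :: t') by rewrite mem_undup mem_head.
    by move: nt; rewrite /nsymbols; case: (undup _).
  move=> n; rewrite ltnS leqn0 => /eqP -> [s [/size0nil -> H]].
  by apply: (H [::]).
move=> k k2; split; first exact: lower.
move=> n; rewrite addn1 ltnS => hn; exact: upper.
Qed.
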